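(* Let $N\ge1$, let $-1=x_0<x_1<\cdots<x_N<1$ be Gauss–Radau points, let $\{l_j\}_{j=0}^N\subset\mathbb{P}_N$ be the Lagrange basis polynomials at these points, and let $B_0(x)=1$, $B_j(x)=\int_{-1}^xL_j(t)\,dt$ ($1\le j\le N$), where $L_j(x)=\frac{Q_N(x)}{(x-x_j)Q_N'(x_j)}$, $Q_N(x)=\prod_{i=1}^N(x-x_i)$; thus $B_j(-1)=0$, $B_j'(x_i)=\delta_{ij}$ for $1\le i,j\le N$. Set $b_{ij}=B_j(x_i)$, $d_{ij}=l_j'(x_i)$ and $\mathbf B=(b_{ij})_{0\le i,j\le N}$, $\mathbf B_{\rm in}=(b_{ij})_{1\le i,j\le N}$, $\mathbf D=(d_{ij})_{0\le i,j\le N}$, $\mathbf D_{\rm in}=(d_{ij})_{1\le i,j\le N}$. Let $\widetilde{\mathbf D}$ be obtained from $\mathbf D$ by replacing its first row by $(1,0,\dots,0)$. Then $$\mathbf D_{\rm in}\mathbf B_{\rm in}=\mathbf I_N,\qquad \widetilde{\mathbf D}\,\mathbf B=\mathbf I_{N+1}.$$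
   Context: Gauss–Radau points: Legendre–Gauss–Radau points (zeros of $P_N+P_{N+1}$, $P_k$ the Legendre polynomials) or Chebyshev–Gauss–Radau points $x_j=-\cos(2j\pi/(2N+1))$. $\mathbb{P}_N$ is the space of polynomials of degree at most $N$; $\mathbf I_M$ is the $M\times M$ identity matrix. *)

(* Defs.v *)
(* Everything is stated over algC (the algebraic complex
   numbers, a numClosedFieldType); the Gauss-Radau points are real elements. *)
From HB Require Import structures.
From mathcomp Require Import all_boot all_order all_algebra all_field.
Set Implicit Arguments. Unset Strict Implicit. Unset Printing Implicit Defensive.
Import Order.TTheory GRing.Theory Num.Theory.
Local Open Scope ring_scope.

Section Defs.
Variable F : fieldType.

(* leg_pair n = (P_n, P_(n+1)), Legendre polynomials via Bonnet's recurrence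
   (n+2) P_(n+2) = (2n+3) X P_(n+1) - (n+1) P_n, P_0 = 1, P_1 = X. *)
Fixpoint leg_pair (n : nat) : {poly F} * {poly F} :=
  match n with
  | 0 => (1, 'X)
  | n'.+1 =>
      let pq := leg_pair n' in
      (pq.2, (n'.+2%:R)^-1 *: ((2 * n' + 3)%N%:R *: ('X * pq.2) - n'.+1%:R *: pq.1))
  end.

Definition legendre (n : nat) : {poly F} := (leg_pair n).1.

Definition prim (p : {poly F}) : {poly F} :=
  \poly_(i < (size p).+1) (if i is k.+1 then p`_k / k.+1%:R else 0).

Variable N : nat.
Variable x : 'I_N.+1 -> F.

Definition lagr (j : 'I_N.+1) : {poly F} :=
  \prod_(k < N.+1 | k != j) ((x j - x k)^-1 *: ('X - (x k)%:P)).

Definition QN : {poly F} := \prod_(i < N.+1 | i != ord0) ('X - (x i)%:P).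

Definition Lpol (j : 'I_N.+1) : {poly F} :=
  (QN %/ ('X - (x j)%:P)) * ((QN^`()).[x j])^-1%:P.

Definition Bpol (j : 'I_N.+1) : {poly F} :=
  if j == ord0 then 1 else prim (Lpol j) - ((prim (Lpol j)).[-1])%:P.

Definition Bmx : 'M[F]_N.+1 := \matrix_(i, j) (Bpol j).[x i].
Definition Dmx : 'M[F]_N.+1 := \matrix_(i, j) ((lagr j)^`()).[x i].
Definition Bin : 'M[F]_N := \matrix_(i, j) Bmx (lift ord0 i) (lift ord0 j).
Definition Din : 'M[F]_N := \matrix_(i, j) Dmx (lift ord0 i) (lift ord0 j).
Definition Dtilde : 'M[F]_N.+1 :=
  \matrix_(i, j) (if i == ord0 then (j == ord0)%:R else Dmx i j).
End Defs.

Definition LGR_points (N : nat) (x : 'I_N.+1 -> algC) : Prop :=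
  forall j, root (legendre algC N + legendre algC N.+1) (x j).

(* Chebyshev-Gauss-Radau: x_j = -cos(2 j pi/(2N+1)) = - Re(w^j),
   w = exp(2 i pi/(2N+1)) = ((2N+1).-root (-1))^2. *)
Definition CGR_points (N : nat) (x : 'I_N.+1 -> algC) : Prop :=
  forall j : 'I_N.+1, x j = - 'Re ((((N.*2).+1).-root (-1)) ^+ (2 * j)).

Definition GaussRadau (N : nat) (x : 'I_N.+1 -> algC) : Prop :=
  LGR_points x \/ CGR_points x.

(* Main.v *)
Require Import Defs.
From HB Require Import structures.
From mathcomp Require Import all_boot all_order all_algebra all_field.
Import Order.TTheory GRing.Theory Num.Theory.
Local Open Scope ring_scope.

Section G.
Variable F : fieldType.
Hypothesis charF : forall n : nat, (n.+1%:R : F) != 0.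

Lemma size_prodXsubC (n : nat) (P : pred 'I_n) (a : 'I_n -> F) :
  size (\prod_(i | P i) ('X - (a i)%:P)) = (#|P|).+1.
Proof.
rewrite size_prod; last by move=> i _; rewrite polyXsubC_eq0.
rewrite (eq_bigr (fun=> 2%N)); last by move=> i _; rewrite size_XsubC.
rewrite sum_nat_const. set k := #|P|. rewrite -addn1 muln2 -addnn.
rewrite -addnA addnC addnK. by rewrite addn1.
Qed.

Lemma natK (a : F) n : a / n.+1%:R *+ n.+1 = a.
Proof. by rewrite -mulr_natr mulfVK. Qed.

Lemma prim_deriv (p : {poly F}) : (prim p)^`() = p.
Proof.
apply/polyP => i; rewrite coef_deriv /prim coef_poly ltnS.
case: ltnP => H.
  exact: natK.
by rewrite mul0rn nth_default.
Qed.

Lemma size_prim (p : {poly F}) : (size (prim p) <= (size p).+1)%N.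
Proof. exact: size_poly. Qed.

Variable N : nat.
Variable x : 'I_N.+1 -> F.
Hypothesis xinj : injective x.

Lemma lagr_eval (i j : 'I_N.+1) : (lagr x j).[x i] = (i == j)%:R.
Proof.
rewrite /lagr horner_prod.
have [->|nij] := eqVneq i j.
  apply: big1 => k nk; rewrite hornerZ hornerXsubC mulVf //.
  by rewrite subr_eq0 (inj_eq xinj) eq_sym.
rewrite (bigD1 i) //= hornerZ hornerXsubC subrr mulr0 mul0r //.
Qed.

Lemma size_lagr j : (size (lagr x j) <= N.+1)%N.
Proof.
rewrite /lagr scaler_prod. apply: leq_trans (size_scale_leq _ _) _.
rewrite size_prodXsubC ltnS.
have H := cardC1 j; rewrite card_ord /= in H.
apply: leq_trans (_ : _ <= #|predC1 j|)%N _; last by rewrite H.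
by apply: subset_leq_card; apply/subsetP => k; rewrite !inE.
Qed.

Lemma interp (p : {poly F}) : (size p <= N.+1)%N ->
  p = \sum_j p.[x j] *: lagr x j.
Proof.
move=> sp; apply/eqP; rewrite -subr_eq0; apply/eqP.
set q := p - _.
have sq : (size q <= N.+1)%N.
  apply: leq_trans (size_polyD _ _) _; rewrite geq_max sp size_polyN /=.
  apply: (big_ind (fun r : {poly F} => size r <= N.+1)%N).
  - by rewrite size_poly0.
  - by move=> a b Ha Hb; apply: leq_trans (size_polyD _ _) _; rewrite geq_max Ha.
  - by move=> j _; apply: leq_trans (size_scale_leq _ _) (size_lagr j).
apply/eqP; apply/negPn/negP => qn0.
have := max_poly_roots qn0 (rs := map x (enum 'I_N.+1)).
rewrite size_map size_enum_ord map_inj_uniq ?enum_uniq //.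
have -> : all (root q) (map x (enum 'I_N.+1)).
  apply/allP => _ /mapP [i _ ->]; rewrite /root /q hornerD hornerN horner_sum.
  rewrite (bigD1 i) //= big1 ?addr0 ?hornerZ ?lagr_eval ?eqxx ?mulr1 ?subrr //.
  by move=> k nk; rewrite hornerZ lagr_eval eq_sym (negPf nk) mulr0.
by move=> /(_ isT isT); rewrite ltnNge sq.
Qed.

Lemma deriv_interp (p : {poly F}) i : (size p <= N.+1)%N ->
  p^`().[x i] = \sum_j Dmx x i j * p.[x j].
Proof.
move=> sp; rewrite [in LHS](interp p sp) raddf_sum horner_sum.
by apply: eq_bigr => j _; rewrite /= derivZ hornerZ mxE mulrC.
Qed.

Hypothesis x0 : x ord0 = -1.

Definition Rj (j : 'I_N.+1) : {poly F} :=
  \prod_(i | (i != ord0) && (i != j)) ('X - (x i)%:P).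

Lemma QN_split j : j != ord0 -> QN x = ('X - (x j)%:P) * Rj j.
Proof. by move=> nj; rewrite /QN (bigD1 j). Qed.

Lemma Lpol_eq j : j != ord0 -> Lpol x j = Rj j * ((Rj j).[x j])^-1%:P.
Proof.
move=> nj; rewrite /Lpol (QN_split j nj) mulKp ?polyXsubC_eq0 // derivM derivXsubC.
by rewrite mul1r hornerD hornerM hornerXsubC subrr mul0r addr0.
Qed.

Lemma Rj_eval0 i j : i != ord0 -> i != j -> (Rj j).[x i] = 0.
Proof.
move=> ni nij; rewrite /Rj horner_prod (bigD1 i) ?ni ?nij //=.
by rewrite hornerXsubC subrr mul0r.
Qed.

Lemma Rj_nz j : (Rj j).[x j] != 0.
Proof.
rewrite /Rj horner_prod; apply/prodf_neq0 => k /andP [_ nk].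
by rewrite hornerXsubC subr_eq0 (inj_eq xinj) eq_sym.
Qed.

Lemma Lpol_eval i j : i != ord0 -> j != ord0 -> (Lpol x j).[x i] = (i == j)%:R.
Proof.
move=> ni nj; rewrite Lpol_eq // hornerM hornerC.
have [->|nij] := eqVneq i j; first by rewrite mulfV ?Rj_nz.
by rewrite (Rj_eval0 i j) // mul0r.
Qed.

Lemma size_Lpol j : j != ord0 -> (size (Lpol x j) <= N)%N.
Proof.
move=> nj; rewrite Lpol_eq // mulrC mul_polyC.
apply: leq_trans (size_scale_leq _ _) _.
rewrite /Rj size_prodXsubC.
have H := cardC1 (ord0 : 'I_N.+1); rewrite card_ord /= in H.
apply: leq_trans (_ : _ <= #|predC1 (ord0 : 'I_N.+1)|)%N _; last first.
  by rewrite H.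
apply: proper_card; rewrite properE; apply/andP; split.
  by apply/subsetP => k; rewrite !inE => /andP [].
apply/subsetPn; exists j; first by rewrite !inE.
by rewrite /in_mem /= eqxx andbF.
Qed.

Lemma size_Bpol j : (size (Bpol x j) <= N.+1)%N.
Proof.
rewrite /Bpol; case: eqP => [_|/eqP nj]; first by rewrite size_poly1.
apply: leq_trans (size_polyD _ _) _; rewrite geq_max size_polyN size_polyC.
rewrite (leq_trans (size_prim _)) ?ltnS ?size_Lpol //.
by case: (_ != 0).
Qed.

Lemma Bpol_deriv j : (Bpol x j)^`() = if j == ord0 then 0 else Lpol x j.
Proof.
rewrite /Bpol; case: eqP => _; first by rewrite derivC.
by rewrite derivB prim_deriv derivC subr0.
Qed.

Lemma Bpol_x0 j : (Bpol x j).[x ord0] = (j == ord0)%:R.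
Proof.
rewrite /Bpol; case: eqP => _; first by rewrite hornerC.
by rewrite hornerD hornerN hornerC x0 subrr.
Qed.

Lemma DB_entry i k : i != ord0 ->
  \sum_j Dmx x i j * (Bpol x k).[x j] = (i == k)%:R.
Proof.
move=> ni; rewrite -deriv_interp ?size_Bpol // Bpol_deriv.
case: eqP => [->|/eqP nk]; first by rewrite horner0 (negPf ni).
by rewrite Lpol_eval.
Qed.

Lemma main_gen : Din x *m Bin x = 1%:M /\ Dtilde x *m Bmx x = 1%:M.
Proof.
split; apply/matrixP => i k; rewrite !mxE.
  rewrite (eq_bigr (fun j => Dmx x (lift ord0 i) (lift ord0 j) *
     (Bpol x (lift ord0 k)).[x (lift ord0 j)])); last by move=> j _; rewrite !mxE.
  have nz : lift ord0 i != ord0 by rewrite eq_sym neq_lift.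
  have nzk : lift ord0 k != ord0 by rewrite eq_sym neq_lift.
  have := DB_entry (lift ord0 i) (lift ord0 k) nz.
  rewrite big_ord_recl Bpol_x0 (negPf nzk) mulr0 add0r => ->.
  by rewrite (inj_eq (@lift_inj _ ord0)).
rewrite (eq_bigr (fun j => (if i == ord0 then (j == ord0)%:R else Dmx x i j) *
     (Bpol x k).[x j])); last by move=> j _; rewrite !mxE.
case: eqP => [->|/eqP ni]; last by rewrite DB_entry.
rewrite (bigD1 ord0) //= big1 ?addr0 ?eqxx ?mul1r ?Bpol_x0 1?eq_sym //.
by move=> j /negPf ->; rewrite mul0r.
Qed.
End G.

Theorem theorem4p1 (N : nat) (x : 'I_N.+1 -> algC) :
  (1 <= N)%N ->
  x ord0 = -1 ->
  (forall i j : 'I_N.+1, (i < j)%N -> x i < x j) ->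
  x ord_max < 1 ->
  GaussRadau x ->
  Din x *m Bin x = 1%:M /\ Dtilde x *m Bmx x = 1%:M.
Proof.
move=> _ x0 mono _ _.
apply: main_gen => //; first by move=> n; rewrite pnatr_eq0.
move=> i j eqx; apply/eqP; apply/negPn/negP => nij.
case: (ltngtP i j) => [lij|lji|/val_inj eij]; last by rewrite eij eqxx in nij.
  by have := mono _ _ lij; rewrite eqx ltxx.
by have := mono _ _ lji; rewrite eqx ltxx.
Qed.
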